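(* Let $r\ge1$ and let $\mathcal V$ be a $(3,2r)$-modular variety. Then for every $\ell\ge1$, $\mathcal V$ satisfies $$A_\ell(\alpha,\beta,\gamma)\subseteq\alpha\beta\circ_{2r^\ell}\alpha\gamma$$ for all congruences $\alpha,\beta,\gamma$; that is, $D^*_{\mathcal V}(\ell)\le 2r^\ell$.
   Context: $\circ$ is relational composition, juxtaposition is intersection. For relations $X,Y$ and $m\ge1$, $X\circ_m Y$ denotes $X\circ Y\circ X\circ\cdots$ with $m$ factors. A variety is $(3,k)$-modular if each of its algebras satisfies $\alpha(\beta\circ\alpha\gamma\circ\beta)\subseteq\alpha\beta\circ_k\alpha\gamma$ for all congruences. The relation terms $A_\ell(\alpha,\beta,\gamma)$ are defined recursively: $A_1(\alpha,\beta,\gamma)=\alpha(\beta\circ\alpha\gamma\circ\beta)$ and $A_{\ell+1}(\alpha,\beta,\gamma)=\alpha\big(\beta\circ A_\ell(\alpha,\gamma,\beta)\circ\beta\big)$ (so e.g. $A_2=\alpha(\beta\circ\alpha(\gamma\circ\alpha\beta\circ\gamma)\circ\beta)$). $D^*_{\mathcal V}(\ell)$ is the least $k$ such that $\mathcal V$ satisfies $A_\ell(\alpha,\beta,\gamma)\subseteq\alpha\beta\circ_k\alpha\gamma$. *)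

(* Defs.v *)
From mathcomp Require Import all_boot.
Set Implicit Arguments. Unset Strict Implicit. Unset Printing Implicit Defensive.

Record signature := Signature { op_sym : Type ; arity : op_sym -> nat }.

Record algebra (S : signature) := Algebra {
  carrier :> Type ;
  interp : forall o : op_sym S, ('I_(arity o) -> carrier) -> carrier }.

Inductive term (S : signature) (X : Type) : Type :=
  | Var : X -> term S X
  | App : forall o : op_sym S, ('I_(arity o) -> term S X) -> term S X.

Fixpoint eval (S : signature) (X : Type) (A : algebra S) (v : X -> A)
  (t : term S X) : A :=
  match t with
  | Var x => v x
  | App o ts => @interp S A o (fun i => @eval S X A v (ts i))
  end.

(* A variety = the class of all models of some set of identities
   (equivalently, by Birkhoff, a class closed under H, S, P). Variables
   range over nat, which suffices since operations are finitary. *)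
Definition is_variety (S : signature) (V : algebra S -> Prop) : Prop :=
  exists E : term S nat * term S nat -> Prop,
    forall A : algebra S,
      V A <-> (forall e, E e -> forall v : nat -> A, @eval S nat A v e.1 = @eval S nat A v e.2).

Definition relation (T : Type) := T -> T -> Prop.

Definition rcomp (T : Type) (X Y : relation T) : relation T :=
  fun x z => exists y, X x y /\ Y y z.
Definition rmeet (T : Type) (X Y : relation T) : relation T :=
  fun x y => X x y /\ Y x y.
Definition rincl (T : Type) (X Y : relation T) : Prop :=
  forall x y, X x y -> Y x y.

(* X o_m Y = X o Y o X o ... with m factors (m >= 1);
   for m = 0 we (arbitrarily) take the identity relation. *)
Fixpoint rcompn (T : Type) (m : nat) (X Y : relation T) : relation T :=
  match m with
  | 0 => fun x y => x = y
  | 1 => X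
  | m'.+1 => rcomp X (rcompn m' Y X)
  end.

Definition is_congruence (S : signature) (A : algebra S) (R : relation A) : Prop :=
  [/\ (forall x, R x x),
      (forall x y, R x y -> R y x),
      (forall x y z, R x y -> R y z -> R x z) &
      (forall (o : op_sym S) (a b : 'I_(arity o) -> A),
          (forall i, R (a i) (b i)) -> R (@interp S A o a) (@interp S A o b))].

(* Arel 0 a b c = a b (intersection), and
   Arel (l+1) a b c = a (b o Arel l a c b o b).
   Hence Arel 1 a b c = a (b o a c o b) = A_1, and Arel l = A_l for l >= 1. *)
Fixpoint Arel (T : Type) (l : nat) (a b c : relation T) : relation T :=
  match l with
  | 0 => rmeet a b
  | l'.+1 => rmeet a (rcomp b (rcomp (Arel l' a c b) b))
  end.

Definition modular3 (S : signature) (V : algebra S -> Prop) (k : nat) : Prop :=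
  forall A : algebra S, V A ->
  forall a b c : relation A,
    is_congruence a -> is_congruence b -> is_congruence c ->
    rincl (rmeet a (rcomp b (rcomp (rmeet a c) b)))
          (rcompn k (rmeet a b) (rmeet a c)).

(* Main.v *)
Require Import Defs.
From mathcomp Require Import all_boot.
From mathcomp Require Import zify.
From Stdlib Require Import FunctionalExtensionality ProofIrrelevance IndefiniteDescription.
Set Implicit Arguments. Unset Strict Implicit.

Fixpoint pw (T : Type) (n : nat) (P : relation T) : relation T :=
  match n with 0 => fun x y => x = y | n'.+1 => rcomp P (pw n' P) end.

Lemma pw_add T m n (P : relation T) x y :
  pw (m + n) P x y <-> rcomp (pw m P) (pw n P) x y.
Proof.
elim: m x => [|m IH] x /=.
  split; [by move=> H; exists x | by case=> z [-> ]].
split.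
  case=> t [Pxt] /IH [s [H1 H2]]; exists s; split=> //; by exists t.
case=> s [[t [Pxt H1]] H2]; exists t; split=> //; apply/IH; by exists s.
Qed.

Lemma pw_mono T n (P P' : relation T) :
  (forall x y, P x y -> P' x y) -> forall x y, pw n P x y -> pw n P' x y.
Proof.
move=> H; elim: n => [|n IH] x y //= [t [h1 h2]]; exists t; split; auto.
Qed.

Lemma pw_mul T m n (P : relation T) x y : pw m (pw n P) x y -> pw (m * n) P x y.
Proof.
elim: m x => [|m IH] x //= [t [h1 h2]].
rewrite mulSn; apply/pw_add; exists t; split; auto.
Qed.

Lemma pw_snoc T n (P : relation T) x y : rcomp (pw n P) P x y -> pw n.+1 P x y.
Proof.
case=> t [h1 h2]; rewrite -addn1; apply/pw_add; exists t; split=> //.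
by exists y.
Qed.

Lemma pw_rev T n (X Y : relation T) :
  (forall x y, X x y -> X y x) -> (forall x y, Y x y -> Y y x) ->
  forall x y, pw n (rcomp X Y) x y -> pw n (rcomp Y X) y x.
Proof.
move=> sX sY; elim: n => [|n IH] x y /=; first by move=> ->.
case=> s [[t [h1 h2]] h3]; apply: pw_snoc; exists s; split; first by apply: IH.
exists t; split; auto.
Qed.

Lemma shiftpad T n (X Y : relation T) :
  (forall x, Y x x) ->
  forall x y, rcomp X (pw n (rcomp Y X)) x y -> pw n.+1 (rcomp X Y) x y.
Proof.
move=> rY; elim: n => [|n IH] x y /=.
  case=> t [h1 e]; subst; exists y; split=> //; by exists y.
case=> t [h1 [s' [[s [h2 h3]] h4]]].
exists s; split; first by exists t.
apply: IH; by exists s'.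
Qed.

Lemma shiftY T n (X Y : relation T) :
  forall x y, rcomp Y (pw n (rcomp X Y)) x y -> rcomp (pw n (rcomp Y X)) Y x y.
Proof.
elim: n => [|n IH] x y /=.
  case=> t [h1 e]; subst; by exists x.
case=> t [h1 [s' [[s [h2 h3]] h4]]].
have [q [hq1 hq2]] : rcomp (pw n (rcomp Y X)) Y s y by apply: IH; exists s'.
exists q; split=> //; exists s; split=> //; by exists t.
Qed.

Lemma mergeY T h (X Y : relation T) :
  (forall x y z, Y x y -> Y y z -> Y x z) -> 0 < h ->
  forall x y, rcomp Y (pw h (rcomp Y X)) x y -> pw h (rcomp Y X) x y.
Proof.
move=> tY; case: h => [//|h] _ x y /= [t [h1 [s' [[s [h2 h3]] h4]]]].
exists s'; split=> //; exists s; split=> //; by apply: tY h2.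
Qed.

Lemma rcompnSS T j (X Y : relation T) : 0 < j ->
  rcompn j.+2 X Y = rcomp X (rcomp Y (rcompn j X Y)).
Proof. by case: j. Qed.

Lemma rcompn_pw T k (X Y : relation T) x y :
  rcompn (2 * k.+1) X Y x y <-> pw k.+1 (rcomp X Y) x y.
Proof.
elim: k x y => [|k IH] x y.
  rewrite /=; split; [by move=> H; exists y | by case=> t [h e]; subst].
have -> : 2 * k.+2 = (2 * k.+1).+2 by lia.
rewrite rcompnSS; last by lia.
split.
  case=> t [h1 [s [h2 /IH h3]]]; exists s; split=> //; by exists t.
case=> s [[t [h1 h2]] /IH h3]; exists t; split=> //; by exists s.
Qed.

Definition compat (S : signature) (A : algebra S) (R : relation A) :=
  forall (o : op_sym S) (f g : 'I_(arity o) -> A),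
    (forall i, R (f i) (g i)) -> R (@interp S A o f) (@interp S A o g).

Lemma rmeet_compat S (A : algebra S) (X Y : relation A) :
  compat X -> compat Y -> compat (rmeet X Y).
Proof. move=> hX hY o f g H; split; [apply: hX | apply: hY] => i; by case: (H i). Qed.

Lemma rcomp_compat S (A : algebra S) (X Y : relation A) :
  compat X -> compat Y -> compat (rcomp X Y).
Proof.
move=> hX hY o f g H.
pose h i := proj1_sig (constructive_indefinite_description _ (H i)).
exists (@interp S A o h); split; [apply: hX | apply: hY] => i;
  by case: (proj2_sig (constructive_indefinite_description _ (H i))).
Qed.

Lemma pw_compat S (A : algebra S) n (P : relation A) :
  compat P -> compat (pw n P).
Proof.
move=> hP; elim: n => [|n IH] o f g H /=.
  by congr interp; apply: functional_extensionality.
by apply: rcomp_compat.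
Qed.

Lemma pw_refl T n (P : relation T) : (forall x, P x x) -> forall x, pw n P x x.
Proof. move=> hP; elim: n => [|n IH] x //=; exists x; split; auto. Qed.

Lemma pw_map T T' (f : T -> T') n (P : relation T) (P' : relation T') :
  (forall p q, P p q -> P' (f p) (f q)) ->
  forall x y, pw n P x y -> pw n P' (f x) (f y).
Proof.
move=> H; elim: n => [|n IH] x y /=; first by move=> ->.
case=> t [h1 h2]; exists (f t); split; auto.
Qed.

Section Sub.
Variables (S : signature) (A : algebra S) (Q : relation A) (hQ : compat Q).

Definition Bcar := {p : A * A | Q p.1 p.2}.
Definition Bint (o : op_sym S) (f : 'I_(arity o) -> Bcar) : Bcar :=
  exist _ (@interp S A o (fun i => (sval (f i)).1), @interp S A o (fun i => (sval (f i)).2))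
    (hQ (fun i => proj2_sig (f i))).
Definition Balg : algebra S := @Algebra S Bcar Bint.

Lemma eval_B (X : Type) (v : X -> Balg) (t : term S X) :
  (sval (eval v t)).1 = eval (fun x => (sval (v x)).1) t /\
  (sval (eval v t)).2 = eval (fun x => (sval (v x)).2) t.
Proof.
elim: t => [x|o ts IH] //=; split; congr interp; apply: functional_extensionality => i;
  by case: (IH i).
Qed.

Lemma sig_eq (p q : Bcar) : sval p = sval q -> p = q.
Proof. case: p q => p hp [q hq] /= e; subst; f_equal; apply: proof_irrelevance. Qed.

Lemma V_B (V : algebra S -> Prop) : is_variety V -> V A -> V Balg.
Proof.
case=> E HE VA; apply/HE => e He v; have HA := proj1 (HE A) VA e He.
apply: sig_eq; case: (eval_B v e.1) => h1 h2; case: (eval_B v e.2) => h3 h4.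
by rewrite [LHS]surjective_pairing [RHS]surjective_pairing h1 h2 h3 h4 !HA.
Qed.

Definition lift1 (R : relation A) : relation Balg := fun p q => R (sval p).1 (sval q).1.
Definition lift2 (R : relation A) : relation Balg := fun p q => R (sval p).2 (sval q).2.

Lemma lift1_cong R : is_congruence R -> is_congruence (lift1 R).
Proof.
case=> r s t c; split; rewrite /lift1.
- by move=> x.
- by move=> x y; apply: s.
- by move=> x y z; apply: t.
- by move=> o f g H; apply: c.
Qed.

Lemma lift2_cong R : is_congruence R -> is_congruence (lift2 R).
Proof.
case=> r s t c; split; rewrite /lift2.
- by move=> x.
- by move=> x y; apply: s.
- by move=> x y z; apply: t.
- by move=> o f g H; apply: c.
Qed.
End Sub.

Lemma lemL (S : signature) (V : algebra S -> Prop) (r : nat) :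
  is_variety V -> modular3 V (2 * r.+1) ->
  forall A : algebra S, V A ->
  forall (a b G Q : relation A), is_congruence a -> is_congruence b ->
  is_congruence G -> compat Q -> (forall x, Q x x) ->
  forall x y u w w' z, a x y -> b x u -> Q u w -> G w w' -> Q z w' -> b z y -> a u z ->
  pw r.+1 (rcomp (rmeet a b)
     (rmeet a (fun p q => exists w w', [/\ Q p w, G w w' & Q q w']))) x y.
Proof.
move=> HV Hmod A VA a b G Q ca cb cG cQ rQ x y u w w' z xy xu uw ww' zw' zy uz.
pose B := Balg cQ.
pose X : B := exist _ (x, x) (rQ x).
pose Y : B := exist _ (y, y) (rQ y).
pose U : B := exist _ (u, w) uw.
pose Z : B := exist _ (z, w') zw'.
have H := Hmod B (V_B cQ HV VA) (lift1 (hQ:=cQ) a) (lift1 (hQ:=cQ) b) (lift2 (hQ:=cQ) G)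
  (lift1_cong cQ ca) (lift1_cong cQ cb) (lift2_cong cQ cG) X Y.
have /rcompn_pw H2 : rcompn (2 * r.+1) (rmeet (lift1 (hQ:=cQ) a) (lift1 (hQ:=cQ) b))
      (rmeet (lift1 (hQ:=cQ) a) (lift2 (hQ:=cQ) G)) X Y.
  apply: H; split; first exact: xy.
  exists U; split; first exact: xu.
  by exists Z.
refine (@pw_map B A (fun p : B => (sval p).1) r.+1 _ _ _ X Y H2).
move=> p q [t [[h1 h2] [h3 h4]]]; exists (sval t).1; split=> //; split=> //.
exists (sval t).2, (sval q).2; split=> //; [exact: (proj2_sig t) | exact: (proj2_sig q)].
Qed.
From Stdlib Require Import FunctionalExtensionality.

Lemma eq_cong S (A : algebra S) : is_congruence (fun x y : A => x = y).
Proof.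
split.
- by [].
- by move=> x y e; subst.
- by move=> x y z e1 e2; subst.
- move=> o f g H; congr interp; exact: functional_extensionality.
Qed.

Lemma meet_cong S (A : algebra S) (a b : relation A) :
  is_congruence a -> is_congruence b -> is_congruence (rmeet a b).
Proof.
case=> ra sa ta ca [rb sb tb cb]; split.
- by move=> x; split.
- by move=> x y [h1 h2]; split; auto.
- by move=> x y z [h1 h2] [h3 h4]; split; [apply: ta h3 | apply: tb h4].
- exact: rmeet_compat.
Qed.

Lemma Arel_a T l (a b c : relation T) x y : Arel l a b c x y -> a x y.
Proof. by case: l => [|l] [] . Qed.

Lemma parity m : exists h, m = h + h \/ m = (h + h).+1.
Proof.
elim: m => [|m [h [->|->]]]; first by exists 0; left.
  by exists h; right.
by exists h.+1; left; lia.
Qed.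

Lemma main (S : signature) (V : algebra S -> Prop) (r : nat) :
  is_variety V -> modular3 V (2 * r.+1) ->
  forall l (A : algebra S), V A -> forall a b c : relation A,
  is_congruence a -> is_congruence b -> is_congruence c ->
  forall x y, Arel l a b c x y -> pw (r.+1 ^ l) (rcomp (rmeet a b) (rmeet a c)) x y.
Proof.
move=> HV Hmod; elim=> [|l IH] A VA a b c ca cb cc x y.
  case: (cc) => rc _ _ _; move=> /= hxy; rewrite ?expn0.
  case: (ca) => ra _ _ _.
  exists y; split=> //; exists y; split; [exact: hxy | split; [apply: ra | apply: rc]].
move=> /= [xy [u [xu [v [uv vy]]]]].
have uvP := IH A VA a c b ca cc cb u v uv.
have auv : a u v := Arel_a uv.
have cX := meet_cong ca cc; have cY := meet_cong ca cb.
case: (cX) => rX sX tX kX; case: (cY) => rY sY tY kY.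
case: (ca) => ra sa ta ka; case: (cb) => rb sb tb kb.
have mpos : 0 < r.+1 ^ l by rewrite expn_gt0.
rewrite expnS; apply: pw_mul.
have [h [Em|Em]] := parity (r.+1 ^ l).
- rewrite Em in uvP mpos; move/pw_add: uvP => [w [uw wv]].
  have vw := pw_rev sX sY wv.
  case: h Em mpos uw wv vw => [|h] Em mpos uw wv vw; first by [].
  case: vw => s [[z [vz zs]] sw].
  have zw : pw h.+1 (rcomp (rmeet a c) (rmeet a b)) z w.
    by apply: shiftpad => //; exists s.
  have zy : b z y by apply: tb (sb _ _ vz.2) vy.
  have uz : a u z by apply: ta auv vz.1.
  have K := lemL HV Hmod VA ca cb (eq_cong A)
    (pw_compat (n:=h.+1) (rcomp_compat kX kY)) (@pw_refl _ h.+1 _ (fun x => ex_intro _ x (conj (rX x) (rY x)))) xy xu uw erefl zw zy uz.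
  apply: (pw_mono _ K); rewrite Em.
  move=> p q [s' [ps [_ [w0 [w1 [sw0 e qw1]]]]]]; subst w1.
  have [t [pt tw0]] := shiftY (ex_intro _ s' (conj ps sw0)).
  have w0q := pw_rev sX sY qw1.
  have tq := mergeY tY (isT : 0 < h.+1) (ex_intro _ w0 (conj tw0 w0q)).
  by apply/pw_add; exists t.
- have Em' : r.+1 ^ l = h + h.+1 by lia.
  rewrite Em' in uvP; move/pw_add: uvP => [w [uw [s [[w' [ww' w's]] sv]]]].
  have [t [w't tv]] := shiftY (ex_intro _ s (conj w's sv)).
  have tw' := pw_rev sY sX w't.
  have zy : b t y by apply: tb tv.2 vy.
  have uz : a u t by apply: ta auv (sa _ _ tv.1).
  have K := lemL HV Hmod VA ca cb cX
    (pw_compat (n:=h) (rcomp_compat kX kY)) (@pw_refl _ h _ (fun x => ex_intro _ x (conj (rX x) (rY x)))) xy xu uw ww' tw' zy uz.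
  apply: (pw_mono _ K); rewrite Em'.
  move=> p q [s' [ps [_ [w0 [w1 [sw0 e qw1]]]]]].
  have [t' [pt tw0]] := shiftY (ex_intro _ s' (conj ps sw0)).
  have w1q := pw_rev sX sY qw1.
  apply/pw_add; exists t'; split=> //.
  exists w1; split=> //; by exists w0.
Qed.

Theorem proposition7p1 (S : signature) (V : algebra S -> Prop) (r : nat) :
  is_variety V -> 1 <= r -> modular3 V (2 * r) ->
  forall l : nat, 1 <= l ->
  forall A : algebra S, V A ->
  forall a b c : relation A,
    is_congruence a -> is_congruence b -> is_congruence c ->
    rincl (Arel l a b c) (rcompn (2 * r ^ l) (rmeet a b) (rmeet a c)).
Proof.
case: r => [//|r] HV _ Hmod l _ A VA a b c ca cb cc x y H.
have := main HV Hmod VA ca cb cc H.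
have : 0 < r.+1 ^ l by rewrite expn_gt0.
case: (r.+1 ^ l) => [//|k] _; exact: (proj2 (rcompn_pw _ _ _ _ _)).
Qed.
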